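(* Let $\mathbb{T}$ be a geometric theory over $\Sigma$ with enough $\mathbb{S}$-indexed models. The functor $\mathcal{M}:\mathcal{C}_{\mathbb{T}}\to\mathrm{Sh}_{I_{\mathbb{T}}}(M_{\mathbb{T}})$, sending $\{\mathbf{x}\mid\phi\}$ to the equivariant sheaf $([\![\mathbf{x}\mid\phi]\!]\xrightarrow{\pi_1}M_{\mathbb{T}},\theta)$ and each arrow to the induced map, is full.
   Context: $\Sigma$ is a single-sorted first-order signature with equality, $\kappa\geq|\Sigma|+\aleph_0$ an infinite cardinal, $\mathbb{S}$ a fixed set of cardinality at least $\kappa$. $M_{\mathbb{T}}$ is the set of $\mathbb{T}$-models whose underlying set is a quotient of a subset of $\mathbb{S}$ (elements $[a]$), $I_{\mathbb{T}}$ the set of isomorphisms between them, with domain/codomain $d,c$. Topologies: $M_{\mathbb{T}}$ has the coarsest topology containing $\{\mathbf{M}:[a]\in\mathbf{M}\}$, $\{\mathbf{M}:[\mathbf{a}]\in R^{\mathbf{M}}\}$ (relation symbols incl.\ equality), $\{\mathbf{M}:f^{\mathbf{M}}([\mathbf{a}])=[b]\}$ (function symbols); $I_{\mathbb{T}}$ the coarsest making $d,c$ continuous and containing $\{\mathbf{f}:[a]\in d(\mathbf{f}),[b]\in c(\mathbf{f}),\mathbf{f}([a])=[b]\}$. $\mathbb{T}$ has enough $\mathbb{S}$-indexed models if every geometric sequent true in all of $M_{\mathbb{T}}$ is provable. $\mathcal{C}_{\mathbb{T}}$ is the syntactic category of $\mathbb{T}$. $[\![\mathbf{x}\mid\phi]\!]=\{(\mathbf{M},[\mathbf{a}]):\mathbf{M}\in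 M_{\mathbb{T}},[\mathbf{a}]\in\phi^{\mathbf{M}}\}$ carries the coarsest topology making the projection $\pi_1$ continuous and such that for every tuple $\mathbf{a}$ the image of $\mathbf{M}\mapsto(\mathbf{M},[\mathbf{a}])$ on $\{\mathbf{M}:[\mathbf{a}]\in\phi^{\mathbf{M}}\}$ is open; $\theta(\mathbf{f}:\mathbf{M}\to\mathbf{N},(\mathbf{M},[\mathbf{a}]))=(\mathbf{N},\mathbf{f}([\mathbf{a}]))$. $\mathrm{Sh}_{I_{\mathbb{T}}}(M_{\mathbb{T}})$ is the topos of equivariant sheaves on $I_{\mathbb{T}}\rightrightarrows M_{\mathbb{T}}$. *)

(* Defs.v *)
From mathcomp Require Import all_boot.

Set Implicit Arguments.
Unset Strict Implicit.
Unset Printing Implicit Defensive.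

(* Single-sorted first-order signature (equality is built in).        *)
Record signature := Sig {
  Fsym : Type; Rsym : Type;
  farity : Fsym -> nat; rarity : Rsym -> nat }.

Section Syntax.
Variable L : signature.

Inductive term (n : nat) : Type :=
| Var of 'I_n
| App (f : Fsym L) of ('I_(farity f) -> term n).

(* geometric formulas in context n; FEx binds variable ord0 of the
   extended context; FDisj is an arbitrary (set/type-indexed) disjunction *)
Inductive form : nat -> Type :=
| FTop n : form n
| FEq n : term n -> term n -> form n
| FRel n (r : Rsym L) : ('I_(rarity r) -> term n) -> form n
| FAnd n : form n -> form n -> form n
| FDisj n (I : Type) : (I -> form n) -> form n
| FEx n : form n.+1 -> form n.

Fixpoint tsubst n m (s : 'I_n -> term m) (t : term n) : term m :=
  match t with
  | Var i => s i
  | App f ts => App (fun j => tsubst s (ts j))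
  end.

Definition tshift n (t : term n) : term n.+1 :=
  tsubst (fun i => Var (lift ord0 i)) t.

Definition up n m (s : 'I_n -> term m) : 'I_n.+1 -> term m.+1 :=
  fun i => match unlift ord0 i with
           | Some j => tshift (s j)
           | None => Var (@ord0 m)
           end.

Fixpoint fsubst n (phi : form n) : forall m, ('I_n -> term m) -> form m :=
  match phi in form n return forall m, ('I_n -> term m) -> form m with
  | FTop _ => fun m _ => FTop m
  | FEq _ t u => fun m s => FEq (tsubst s t) (tsubst s u)
  | FRel _ r ts => fun m s => FRel (fun j => tsubst s (ts j))
  | FAnd _ p q => fun m s => FAnd (fsubst p s) (fsubst q s)
  | FDisj _ J f => fun m s => FDisj (fun i => fsubst (f i) s)
  | FEx _ p => fun m s => FEx (fsubst p (up s))
  end.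

Definition fshift n (phi : form n) : form n.+1 :=
  fsubst phi (fun i => Var (lift ord0 i)).

(* existentially quantify the first m variables of context m + n *)
Fixpoint Exs n m : form (m + n) -> form n :=
  match m return form (m + n) -> form n with
  | 0 => fun phi => phi
  | m'.+1 => fun phi => Exs (FEx phi)
  end.

(* Deduction system of geometric logic (Johnstone, Elephant D1.3.1),
   relative to a theory T (a set of sequents phi |-_n psi).            *)
Section Prov.
Variable T : forall n, form n -> form n -> Prop.

Inductive Prov : forall n, form n -> form n -> Prop :=
| P_ax n (phi psi : form n) : T phi psi -> Prov phi psi
| P_refl n (phi : form n) : Prov phi phi
| P_cut n (phi psi chi : form n) : Prov phi psi -> Prov psi chi -> Prov phi chi
| P_subst n m (s : 'I_n -> term m) (phi psi : form n) :
    Prov phi psi -> Prov (fsubst phi s) (fsubst psi s)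
| P_eqrefl n (i : 'I_n) : Prov (FTop n) (FEq (Var i) (Var i))
| P_eqsubst n (i j : 'I_n) (phi : form n) :
    Prov (FAnd (FEq (Var i) (Var j)) phi)
         (fsubst phi (fun k => if k == i then Var j else Var k))
| P_top n (phi : form n) : Prov phi (FTop n)
| P_andl n (phi psi : form n) : Prov (FAnd phi psi) phi
| P_andr n (phi psi : form n) : Prov (FAnd phi psi) psi
| P_andI n (phi psi chi : form n) :
    Prov phi psi -> Prov phi chi -> Prov phi (FAnd psi chi)
| P_disjI n (I : Type) (f : I -> form n) (i : I) : Prov (f i) (FDisj f)
| P_disjE n (I : Type) (f : I -> form n) (psi : form n) :
    (forall i, Prov (f i) psi) -> Prov (FDisj f) psi
| P_exE n (phi : form n.+1) (psi : form n) :
    Prov phi (fshift psi) -> Prov (FEx phi) psi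
| P_exI n (phi : form n.+1) (psi : form n) :
    Prov (FEx phi) psi -> Prov phi (fshift psi)
| P_distr n (phi : form n) (I : Type) (f : I -> form n) :
    Prov (FAnd phi (FDisj f)) (FDisj (fun i => FAnd phi (f i)))
| P_frob n (phi : form n) (psi : form n.+1) :
    Prov (FAnd phi (FEx psi)) (FEx (FAnd (fshift phi) psi)).
End Prov.

(* Semantics: structures whose underlying set is a quotient of a subset
   of S, presented by a partial equivalence relation sE on S (domain =
   {a | sE a a}, elements [a] = classes), with saturated interpretations. *)
Section Sem.
Variable S : Type.

Record structure := Struct {
  sE : S -> S -> Prop;
  sfun : forall f : Fsym L, ('I_(farity f) -> S) -> S -> Prop; (* graph *)
  srel : forall r : Rsym L, ('I_(rarity r) -> S) -> Prop }.
Arguments sfun : clear implicits.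
Arguments srel : clear implicits.

Definition dom (M : structure) (a : S) := sE M a a.

Definition is_structure (M : structure) : Prop :=
  (forall a b, sE M a b -> sE M b a) /\
  (forall a b c, sE M a b -> sE M b c -> sE M a c) /\
  (forall r a, srel M r a -> forall i, dom M (a i)) /\
  (forall r a a', (forall i, sE M (a i) (a' i)) -> srel M r a -> srel M r a') /\
  (forall f a b, sfun M f a b -> (forall i, dom M (a i)) /\ dom M b) /\
  (forall f a a' b b', (forall i, sE M (a i) (a' i)) -> sE M b b' ->
      sfun M f a b -> sfun M f a' b') /\
  (forall f a, (forall i, dom M (a i)) -> exists b, sfun M f a b) /\
  (forall f a b b', sfun M f a b -> sfun M f a b' -> sE M b b').

Fixpoint teval (M : structure) n (env : 'I_n -> S) (t : term n) (b : S) : Prop :=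
  match t with
  | Var i => sE M (env i) b
  | App f ts => exists a, (forall j, teval M env (ts j) (a j)) /\ sfun M f a b
  end.

Definition ext n (s : S) (env : 'I_n -> S) : 'I_n.+1 -> S :=
  fun i => match unlift ord0 i with Some j => env j | None => s end.

Fixpoint sat (M : structure) n (phi : form n) : ('I_n -> S) -> Prop :=
  match phi in form n return ('I_n -> S) -> Prop with
  | FTop _ => fun _ => True
  | FEq _ t u => fun env => exists b, teval M env t b /\ teval M env u b
  | FRel _ r ts => fun env =>
      exists a, (forall j, teval M env (ts j) (a j)) /\ srel M r a
  | FAnd _ p q => fun env => sat M p env /\ sat M q env
  | FDisj _ J f => fun env => exists i, sat M (f i) env
  | FEx _ p => fun env => exists s, dom M s /\ sat M p (ext s env)
  end.

Definition is_model (T : forall n, form n -> form n -> Prop) (M : structure) :=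
  is_structure M /\
  forall n (phi psi : form n), T n phi psi ->
    forall env, (forall i, dom M (env i)) -> sat M phi env -> sat M psi env.

(* isomorphisms, as saturated relations inducing bijections of classes *)
Definition is_iso (M N : structure) (F : S -> S -> Prop) : Prop :=
  (forall a b, F a b -> dom M a /\ dom N b) /\
  (forall a a' b b', sE M a a' -> sE N b b' -> F a b -> F a' b') /\
  (forall a b b', F a b -> F a b' -> sE N b b') /\
  (forall a a' b, F a b -> F a' b -> sE M a a') /\
  (forall a, dom M a -> exists b, F a b) /\
  (forall b, dom N b -> exists a, F a b) /\
  (forall r a b, (forall i, F (a i) (b i)) -> (srel M r a <-> srel N r b)) /\
  (forall f a b c d, (forall i, F (a i) (b i)) -> F c d ->
      (sfun M f a c <-> sfun N f b d)).

Definition is_topology X (O : (X -> Prop) -> Prop) : Prop :=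
  O (fun _ => True) /\
  (forall U V, O U -> O V -> O (fun x => U x /\ V x)) /\
  (forall F : (X -> Prop) -> Prop, (forall U, F U -> O U) ->
     O (fun x => exists U, F U /\ U x)).

Definition gen_top X (B : (X -> Prop) -> Prop) (U : X -> Prop) : Prop :=
  forall O, is_topology O -> (forall V, B V -> O V) -> O U.

Definition cont X Y (BX : (X -> Prop) -> Prop) (BY : (Y -> Prop) -> Prop)
  (g : X -> Y) : Prop :=
  forall V, gen_top BY V -> gen_top BX (fun x => V (g x)).

Section Groupoid.
Variable T : forall n, form n -> form n -> Prop.

Definition MT := {M : structure | is_model T M}.

Definition MT_sub (U : MT -> Prop) : Prop :=
  (exists a, U = fun M => dom (proj1_sig M) a) \/
  (exists r a, U = fun M => srel (proj1_sig M) r a) \/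
  (exists a b, U = fun M => sE (proj1_sig M) a b) \/
  (exists f a b, U = fun M => sfun (proj1_sig M) f a b).

Definition IT := {x : MT * MT * (S -> S -> Prop) |
                   is_iso (proj1_sig x.1.1) (proj1_sig x.1.2) x.2}.
Definition dI (f : IT) : MT := (proj1_sig f).1.1.
Definition cI (f : IT) : MT := (proj1_sig f).1.2.
Definition fI (f : IT) : S -> S -> Prop := (proj1_sig f).2.

Definition IT_sub (U : IT -> Prop) : Prop :=
  (exists V, gen_top MT_sub V /\ U = fun f => V (dI f)) \/
  (exists V, gen_top MT_sub V /\ U = fun f => V (cI f)) \/
  (exists a b, U = fun f => dom (proj1_sig (dI f)) a /\ dom (proj1_sig (cI f)) b /\ fI f a b).

(* [[x | phi]] : pairs (M, [a]) with [a] a tuple of classes in phi^M *)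
Definition represents (M : structure) n (c : 'I_n -> S -> Prop) (a : 'I_n -> S) :=
  forall i, dom M (a i) /\ c i = sE M (a i).

Definition Elt n (phi : form n) :=
  {p : MT * ('I_n -> S -> Prop) |
     exists a, represents (proj1_sig p.1) p.2 a /\ sat (proj1_sig p.1) phi a}.
Definition pi1 n (phi : form n) (e : Elt phi) : MT := (proj1_sig e).1.
Definition cls n (phi : form n) (e : Elt phi) : 'I_n -> S -> Prop := (proj1_sig e).2.

Definition Elt_sub n (phi : form n) (U : Elt phi -> Prop) : Prop :=
  (exists V, gen_top MT_sub V /\ U = fun e => V (pi1 e)) \/
  (exists a : 'I_n -> S, U = fun e => represents (proj1_sig (pi1 e)) (cls e) a).

(* action theta(f, (M,[a])) = (N, f[a]) on the class tuples *)
Definition act_cls (f : IT) n (c : 'I_n -> S -> Prop) : 'I_n -> S -> Prop :=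
  fun i t => exists s, c i s /\ fI f s t.

(* morphisms of equivariant sheaves on I_T ⇉ M_T *)
Definition sheaf_hom n (phi : form n) m (psi : form m)
  (g : Elt phi -> Elt psi) : Prop :=
  cont (@Elt_sub n phi) (@Elt_sub m psi) g /\
  (forall e, pi1 (g e) = pi1 e) /\
  (forall (f : IT) (e e' : Elt phi), dI f = pi1 e -> pi1 e' = cI f ->
      cls e' = act_cls f (cls e) -> cls (g e') = act_cls f (cls (g e))).

End Groupoid.
End Sem.

(* Arrows of the syntactic category {x|phi} -> {y|psi}: T-provably
   functional formulas chi in context (y, x) = m + n (y first).        *)
Section SynCat.
Variable T : forall n, form n -> form n -> Prop.

Definition sig1 n m (k : 'I_(m + n)) : term (m + (m + n)) :=
  match split k with
  | inl j => Var (lshift (m + n) j)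
  | inr i => Var (rshift m (rshift m i))
  end.
Definition sig2 n m (k : 'I_(m + n)) : term (m + (m + n)) :=
  match split k with
  | inl j => Var (rshift m (lshift n j))
  | inr i => Var (rshift m (rshift m i))
  end.

Definition yeqs n m : form (m + (m + n)) :=
  foldr (fun j acc => FAnd (FEq (Var (lshift (m + n) j))
                               (Var (rshift m (lshift n j)))) acc)
        (FTop _) (enum 'I_m).

Definition prov_functional n (phi : form n) m (psi : form m)
  (chi : form (m + n)) : Prop :=
  Prov T chi (FAnd (fsubst phi (fun i => Var (rshift m i)))
                   (fsubst psi (fun j => Var (lshift n j)))) /\
  Prov T phi (Exs chi) /\
  Prov T (FAnd (fsubst chi (@sig1 n m)) (fsubst chi (@sig2 n m))) (@yeqs n m).
End SynCat.
End Syntax.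

Definition join S n m (b : 'I_m -> S) (a : 'I_n -> S) : 'I_(m + n) -> S :=
  fun k => match split k with inl j => b j | inr i => a i end.

(* Main.v *)
Require Import Defs.
From mathcomp Require Import all_boot.
From Stdlib Require Import ClassicalEpsilon FunctionalExtensionality PropExtensionality ProofIrrelevance.
From mathcomp Require Import zify.
Set Implicit Arguments.
Unset Strict Implicit.
Unset Printing Implicit Defensive.

Section Basics.
Variable L : signature.
Variable S : Type.

Section St.
Variable M : structure L S.
Hypothesis HM : is_structure M.

Lemma sE_sym a b : sE M a b -> sE M b a.
Proof. by case: HM => H _; apply: H. Qed.
Lemma sE_trans a b c : sE M a b -> sE M b c -> sE M a c.
Proof. by case: HM => _ [H _]; apply: H. Qed.
Lemma sE_doml a b : sE M a b -> dom M a.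
Proof. move=> h; exact: sE_trans h (sE_sym h). Qed.
Lemma sE_domr a b : sE M a b -> dom M b.
Proof. move=> h; exact: sE_trans (sE_sym h) h. Qed.
Lemma rel_dom r a : @srel _ _ M r a -> forall i, dom M (a i).
Proof. by case: HM => _ [_ [H _]]; apply: H. Qed.
Lemma rel_sat r a a' : (forall i, sE M (a i) (a' i)) -> @srel _ _ M r a -> @srel _ _ M r a'.
Proof. by case: HM => _ [_ [_ [H _]]]; apply: H. Qed.
Lemma fun_dom f a b : @sfun _ _ M f a b -> (forall i, dom M (a i)) /\ dom M b.
Proof. by case: HM => _ [_ [_ [_ [H _]]]]; apply: H. Qed.
Lemma fun_sat f a a' b b' : (forall i, sE M (a i) (a' i)) -> sE M b b' ->
      @sfun _ _ M f a b -> @sfun _ _ M f a' b'.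
Proof. by case: HM => _ [_ [_ [_ [_ [H _]]]]]; apply: H. Qed.
Lemma fun_tot f a : (forall i, dom M (a i)) -> exists b, @sfun _ _ M f a b.
Proof. by case: HM => _ [_ [_ [_ [_ [_ [H _]]]]]]; apply: H. Qed.

Lemma teval_dom n env (t : term L n) b : teval M env t b -> dom M b.
Proof.
case: t => [i|f ts] /=; first exact: sE_domr.
by case=> a [_ /fun_dom []].
Qed.

Lemma teval_inv n (env env' : 'I_n -> S) (t : term L n) b b' :
  (forall i, sE M (env i) (env' i)) -> sE M b b' ->
  teval M env t b -> teval M env' t b'.
Proof.
move=> He; elim: t b b' => [i|f ts IH] b b' Hb /=.
  move=> h; apply: sE_trans (sE_sym (He i)) (sE_trans h Hb).
case=> a [Ha Hf]; have [Hd _] := fun_dom Hf; exists a; split.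
  move=> j; apply: IH (Ha j); apply: Hd.
by apply: fun_sat Hf.
Qed.

Lemma sat_inv n (phi : form L n) (env env' : 'I_n -> S) :
  (forall i, sE M (env i) (env' i)) -> sat M phi env -> sat M phi env'.
Proof.
elim: phi env env' => {n} [n|n t u|n r ts|n p IHp q IHq|n I f IH|n p IH] env env' He /=.
- by [].
- case=> b [h1 h2]; exists b; have db := teval_dom h1.
  by split; [exact: (teval_inv He db h1)|exact: (teval_inv He db h2)].
- case=> a [Ha Hr]; exists a; split => // j.
  exact: (teval_inv He (teval_dom (Ha j)) (Ha j)).
- by case=> h1 h2; split; [apply: IHp h1|apply: IHq h2].
- by case=> i h; exists i; apply: IH h.
- case=> s [Hs h]; exists s; split => //; apply: IH h => i.
  rewrite /ext; case: (unlift ord0 i) => [j|] //.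
Qed.
End St.
End Basics.
Arguments sE_sym {L S M} HM {a b} _.
Arguments sE_trans {L S M} HM {a b c} _ _.
Arguments sE_doml {L S M} HM {a b} _.
Arguments sE_domr {L S M} HM {a b} _.
Arguments rel_dom {L S M} HM {r a} _ i.
Arguments rel_sat {L S M} HM {r a a'} _ _.
Arguments fun_dom {L S M} HM {f a b} _.
Arguments fun_sat {L S M} HM {f a a' b b'} _ _ _.
Arguments fun_tot {L S M} HM {f a} _.
Arguments teval_dom {L S M} HM {n env t b} _.
Arguments teval_inv {L S M} HM {n env env' t b b'} _ _ _.
Arguments sat_inv {L S M} HM {n phi env env'} _ _.

Section Ren.
Variable L : signature.
Variable S : Type.

Lemma join_lo n m (b : 'I_m -> S) (a : 'I_n -> S) (k : 'I_(m+n)) (j : 'I_m) :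
  k = j :> nat -> join b a k = b j.
Proof.
move=> E; rewrite /join; case: splitP => [j' E'|k' E'].
  by congr b; apply: val_inj; rewrite /= -E' E.
exfalso; have := ltn_ord j; lia.
Qed.

Lemma join_hi n m (b : 'I_m -> S) (a : 'I_n -> S) (k : 'I_(m+n)) (i : 'I_n) :
  k = m + i :> nat -> join b a k = a i.
Proof.
move=> E; rewrite /join; case: splitP => [j' E'|k' E'].
  exfalso; have := ltn_ord j'; lia.
by congr a; apply: val_inj => /=; lia.
Qed.

Lemma ext_0 n (x : S) (env : 'I_n -> S) (k : 'I_n.+1) : k = 0 :> nat -> ext x env k = x.
Proof. rewrite /ext; case: unliftP => [j ->|] //; by rewrite lift0. Qed.

Lemma ext_S n (x : S) (env : 'I_n -> S) (k : 'I_n.+1) (j : 'I_n) :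
  k = j.+1 :> nat -> ext x env k = env j.
Proof.
rewrite /ext; case: unliftP => [j' ->|-> //].
by rewrite lift0 => [[E]]; congr env; apply: val_inj.
Qed.

Variable M : structure L S.

Lemma teval_ren n m (s : 'I_n -> term L m) (rho : 'I_n -> 'I_m) :
  (forall i, s i = Var L (rho i)) -> forall env (t : term L n) b,
  teval M env (tsubst s t) b <-> teval M (fun i => env (rho i)) t b.
Proof.
move=> Hs env; elim=> [i|f ts IH] b /=; first by rewrite Hs.
split; case=> a [Ha Hf]; exists a; split => // j; by apply/IH.
Qed.

Lemma sat_ren n (phi : form L n) m (s : 'I_n -> term L m) (rho : 'I_n -> 'I_m) :
  (forall i, s i = Var L (rho i)) -> forall env,
  sat M (fsubst phi s) env <-> sat M phi (fun i => env (rho i)).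
Proof.
elim: phi m s rho => {n} [n|n t u|n r ts|n p IHp q IHq|n I f IH|n p IH] m s rho Hs env /=.
- by [].
- by split; case=> b [h1 h2]; exists b; split; by apply/(teval_ren Hs).
- split; case=> a [Ha Hr]; exists a; split => // j.
  + exact: (proj1 (teval_ren Hs env _ _) (Ha j)).
  + exact: (proj2 (teval_ren Hs env _ _) (Ha j)).
- by split; case=> h1 h2; split; [apply/(IHp _ _ _ Hs)|apply/(IHq _ _ _ Hs)|apply/(IHp _ _ _ Hs)|apply/(IHq _ _ _ Hs)].
- by split; case=> i h; exists i; apply/(IH i _ _ _ Hs).
- pose rho' (i : 'I_n.+1) : 'I_m.+1 :=
    match unlift ord0 i with Some j => lift ord0 (rho j) | None => ord0 end.
  have Hs' : forall i, up s i = Var L (rho' i).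
    by move=> i; rewrite /up /rho'; case: (unlift ord0 i) => [j|] //; rewrite Hs.
  split; case=> x [Hx h]; exists x; split => //.
    move/(IH _ _ _ Hs'): h.
    have -> // : (fun i => ext x env (rho' i)) = ext x (fun i => env (rho i)).
    apply: functional_extensionality => i; rewrite /rho' /ext.
    by case: (unlift ord0 i) => [j|]; rewrite ?liftK ?unlift_none.
  apply/(IH _ _ _ Hs').
  have -> // : (fun i => ext x env (rho' i)) = ext x (fun i => env (rho i)).
  apply: functional_extensionality => i; rewrite /rho' /ext.
  by case: (unlift ord0 i) => [j|]; rewrite ?liftK ?unlift_none.
Qed.

Lemma sat_Exs K n (body : form L (K + n)) env :
  sat M (Exs body) env <->
  exists z : 'I_K -> S, (forall i, dom M (z i)) /\ sat M body (join z env).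
Proof.
elim: K body => [|K IH] body /=.
  have z : 'I_0 -> S by case=> ?; rewrite ltn0.
  have E : join z env = env.
    by apply: functional_extensionality => k; apply: join_hi.
  split; first by move=> h; exists z; split; [by case|rewrite E].
  by case=> z' [_]; have -> : join z' env = env
    by apply: functional_extensionality => k; apply: join_hi.
rewrite IH /=.
have E : forall (x : S) (z : 'I_K -> S),
    ext x (join z env) = join (ext x z) env.
  move=> x z; apply: functional_extensionality => k.
  case: (unliftP ord0 k) => [j ->|->].
    rewrite /ext liftK; case: (splitP j) => [j1 E1|j2 E2].
      rewrite (join_lo _ _ E1) (@join_lo _ _ _ _ _ (lift ord0 j1)); last by rewrite !lift0 /= E1.
      by rewrite liftK.
    rewrite (join_hi _ _ E2) (@join_hi _ _ _ _ _ j2) //.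
    by rewrite lift0 /= E2.
  by rewrite (@join_lo _ _ _ _ _ (ord0)) // !ext_0.
split.
  case=> z [Hz [x [Hx h]]]; exists (ext x z); split.
    by move=> i; rewrite /ext; case: (unlift ord0 i).
  by rewrite -E.
case=> z [Hz h]; exists (fun i => z (lift ord0 i)); split; first by [].
exists (z ord0); split => //.
rewrite E; suff -> : ext (z ord0) (fun i => z (lift ord0 i)) = z by [].
apply: functional_extensionality => i; rewrite /ext.
by case: unliftP => [j ->|->]; rewrite ?liftK ?unlift_none.
Qed.
End Ren.

Lemma fun_uniq L S (M : structure L S) : is_structure M ->
  forall f a b b', @sfun _ _ M f a b -> @sfun _ _ M f a b' -> sE M b b'.
Proof. by case=> _ [_ [_ [_ [_ [_ [_ H]]]]]]; apply: H. Qed.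

Section Pull.
Variable L : signature.
Variable S : Type.
Variable N : structure L S.
Hypothesis HN : is_structure N.
Variables q qi : S -> S.
Hypothesis qK : forall y, q (qi y) = y.

Definition pull : structure L S :=
  @Struct L S (fun x y => sE N (q x) (q y))
    (fun f a b => @sfun _ _ N f (fun i => q (a i)) (q b))
    (fun r a => @srel _ _ N r (fun i => q (a i))).

Lemma qK_fun n (a : 'I_n -> S) : (fun i => q (qi (a i))) = a.
Proof. by apply: functional_extensionality => i; rewrite qK. Qed.

Lemma pull_struct : is_structure pull.
Proof.
rewrite /pull /dom; split; [|split; [|split; [|split; [|split; [|split; [|split]]]]]] => /=.
- by move=> a b; apply: sE_sym.
- by move=> a b c; apply: sE_trans.
- by move=> r a h i; exact: (rel_dom HN h i).
- by move=> r a a' H h; apply: (rel_sat HN H h).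
- by move=> f a b h; have [H1 H2] := fun_dom HN h.
- by move=> f a a' b b' H Hb h; apply: (fun_sat HN H Hb h).
- move=> f a H; have [b Hb] := fun_tot HN H; exists (qi b); by rewrite qK.
- by move=> f a b b' h1 h2; apply: (fun_uniq HN h1 h2).
Qed.

Lemma teval_pull n (env : 'I_n -> S) (t : term L n) b :
  teval pull env t b <-> teval N (fun i => q (env i)) t (q b).
Proof.
elim: t b => [i|f ts IH] b /=; first by [].
split.
  case=> a [Ha Hf]; exists (fun i => q (a i)); split => // j; exact/IH.
case=> a [Ha Hf]; exists (fun i => qi (a i)); split; last by rewrite qK_fun.
by move=> j; apply/IH; rewrite qK.
Qed.

Lemma sat_pull n (phi : form L n) (env : 'I_n -> S) :
  sat pull phi env <-> sat N phi (fun i => q (env i)).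
Proof.
elim: phi env => {n} [n|n t u|n r ts|n p IHp q0 IHq|n I f IH|n p IH] env /=.
- by [].
- split.
    by case=> b [h1 h2]; exists (q b); split; apply/teval_pull.
  by case=> b [h1 h2]; exists (qi b); split; apply/teval_pull; rewrite qK.
- split.
    case=> a [Ha Hr]; exists (fun i => q (a i)); split => // j; exact/teval_pull.
  case=> a [Ha Hr]; exists (fun i => qi (a i)); split; last by rewrite qK_fun.
  by move=> j; apply/teval_pull; rewrite qK.
- by split; case=> h1 h2; split; [apply/IHp|apply/IHq|apply/IHp|apply/IHq].
- by split; case=> i h; exists i; apply/IH.
- have E : forall x, (fun i => q (ext x env i)) = ext (q x) (fun i => q (env i)).
    move=> x; apply: functional_extensionality => i; rewrite /ext.
    by case: (unlift ord0 i).
  split.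
    by case=> x [Hx h]; exists (q x); split => //; rewrite -E; apply/IH.
  case=> x [Hx h]; exists (qi x); split; first by rewrite /dom /= qK.
  by apply/IH; rewrite E qK.
Qed.

Lemma pull_model (T : forall n, form L n -> form L n -> Prop) :
  is_model T N -> is_model T pull.
Proof.
case=> _ HT; split; first exact: pull_struct.
move=> n phi psi Hpp env Hd /sat_pull h; apply/sat_pull.
by apply: HT Hpp _ _ h => i; apply: Hd.
Qed.

Definition pullF (u x : S) : Prop := sE N u (q x).

Lemma pull_iso : is_iso N pull pullF.
Proof.
rewrite /pullF /pull /dom; split; [|split; [|split; [|split; [|split; [|split; [|split]]]]]] => /=.
- by move=> a b h; split; [apply: sE_doml h|apply: sE_domr h].
- by move=> a a' b b' h1 h2 h; apply: sE_trans (sE_sym HN h1) (sE_trans HN h h2).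
- by move=> a b b' h1 h2; apply: sE_trans (sE_sym HN h1) h2.
- by move=> a a' b h1 h2; apply: sE_trans h1 (sE_sym HN h2).
- by move=> a h; exists (qi a); rewrite qK.
- by move=> b h; exists (q b).
- move=> r a b H; split => h.
    exact: (rel_sat HN (a' := fun i => q (b i)) H h).
  by apply: (rel_sat HN (a := fun i => q (b i))) h => i; exact: (sE_sym HN (H i)).
- move=> f a b c d H Hc; split => h.
    exact: (fun_sat HN (a' := fun i => q (b i)) H Hc h).
  by apply: (fun_sat HN (a := fun i => q (b i))) (sE_sym HN Hc) h => i; exact: (sE_sym HN (H i)).
Qed.
End Pull.

Notation emi := excluded_middle_informative.
Notation cid := constructive_indefinite_description.

Lemma surj_fix S (e : nat -> S) (einj : injective e) K (w zz : 'I_K -> S) :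
  exists q : S -> S, (forall y, exists x, q x = y) /\
    forall i, exists i', w i' = w i /\ q (w i) = zz i'.
Proof.
pose idx (i : 'I_K) : nat :=
  match emi (exists n, e n = w i) with
  | left H => proj1_sig (cid _ H) | right _ => 0 end.
have Hidx : forall i n, e n = w i -> idx i = n.
  move=> i n Hn; rewrite /idx; case: emi => [H|H]; last by exfalso; apply: H; exists n.
  case: (cid _ H) => n' Hn' /=; apply: einj; by rewrite Hn Hn'.
pose N0 := (\max_i idx i).+1.
have fresh : forall p i, e (N0 + p) <> w i.
  move=> p i E; have h2 := @leq_bigmax _ idx i; rewrite (Hidx _ _ E) /N0 in h2; lia.
pose q (x : S) : S :=
  match emi (exists i, w i = x) with
  | left H => zz (proj1_sig (cid _ H))
  | right _ =>
    match emi (exists i : 'I_K, e (N0 + i) = x) with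
    | left H => w (proj1_sig (cid _ H))
    | right _ =>
      match emi (exists p, e (N0 + K + p) = x) with
      | left H => e (N0 + proj1_sig (cid _ H))
      | right _ => x end end end.
exists q; split; last first.
  move=> i; rewrite /q; case: emi => [H|H]; last by exfalso; apply: H; exists i.
  by case: (cid _ H) => i' Hi' /=; exists i'.
move=> y; case: (classic (exists i, w i = y)) => [[i Hi]|Hw].
  exists (e (N0 + i)); rewrite /q.
  case: emi => [H|_]; first by exfalso; case: H => j Hj; apply: (fresh i j); rewrite Hj.
  case: emi => [H|H]; last by exfalso; apply: H; exists i.
  case: (cid _ H) => i' Hi' /=.
  have -> : i' = i by apply: val_inj; apply/eqP; rewrite -(eqn_add2l N0); apply/eqP; apply: einj.
  done.
case: (classic (exists p, e (N0 + p) = y)) => [[p Hp]|He].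
  exists (e (N0 + K + p)); rewrite /q.
  case: emi => [H|_]; first by exfalso; case: H => j Hj; apply: (fresh (K + p) j); rewrite Hj addnA.
  case: emi => [H|_].
    exfalso; case: H => i' /einj Hi'; have := ltn_ord i'; lia.
  case: emi => [H|H]; last by exfalso; apply: H; exists p.
  case: (cid _ H) => p' Hp' /=.
  have -> : p' = p by apply/eqP; rewrite -(eqn_add2l (N0 + K)); apply/eqP; apply: einj.
  done.
exists y; rewrite /q.
case: emi => [H|_]; first by exfalso; apply: Hw.
case: emi => [[i Hi]|_]; first by exfalso; apply: He; exists i.
case: emi => [[p Hp]|_] //; exfalso; apply: He; exists (K + p); by rewrite addnA.
Qed.

Section Nbhd.
Variable L : signature.
Variable S : Type.
Variable T : forall n, form L n -> form L n -> Prop.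
Variable s0 : S.

Lemma MT_struct (M : MT S T) : is_structure (proj1_sig M).
Proof. exact: (proj2_sig M).1. Qed.

Definition bigA k (X : Type) (l : seq X) (F : X -> form L k) : form L k :=
  foldr (fun x acc => FAnd (F x) acc) (FTop L k) l.

Lemma sat_bigA (M : structure L S) k (X : eqType) (l : seq X) (F : X -> form L k) env :
  sat M (bigA l F) env <-> forall x, x \in l -> sat M (F x) env.
Proof.
elim: l => [|x l IH] /=; first by split.
split.
  case=> h1 /IH h2 y; rewrite inE; case/orP => [/eqP ->|] //; exact: h2.
move=> H; split; first by apply: H; rewrite inE eqxx.
by apply/IH => y hy; apply: H; rewrite inE hy orbT.
Qed.

Lemma sat_bigA_enum (M : structure L S) k (X : finType) (F : X -> form L k) env :
  sat M (bigA (enum X) F) env <-> forall x, sat M (F x) env.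
Proof.
split; first by move/sat_bigA => H x; apply: H; rewrite mem_enum.
by move=> H; apply/sat_bigA => x _; apply: H.
Qed.

Lemma sat_eqvv (M : structure L S) (HM : is_structure M) k (i j : 'I_k) env :
  sat M (FEq (Var L i) (Var L j)) env <-> sE M (env i) (env j).
Proof.
split => /=.
  by case=> c [h1 h2]; exact: (sE_trans HM h1 (sE_sym HM h2)).
by move=> h; exists (env j); split => //; exact: (sE_domr HM h).
Qed.

Definition cmb k1 k2 (t1 : form L k1) (t2 : form L k2) : form L (k1 + k2) :=
  FAnd (fsubst t1 (fun i => Var L (lshift k2 i)))
       (fsubst t2 (fun i => Var L (rshift k1 i))).

Lemma join_lshift k1 k2 (w1 : 'I_k1 -> S) (w2 : 'I_k2 -> S) :
  (fun i => join w1 w2 (lshift k2 i)) = w1.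
Proof. by apply: functional_extensionality => i; apply: join_lo. Qed.
Lemma join_rshift k1 k2 (w1 : 'I_k1 -> S) (w2 : 'I_k2 -> S) :
  (fun i => join w1 w2 (rshift k1 i)) = w2.
Proof. by apply: functional_extensionality => i; apply: join_hi. Qed.

Lemma sat_cmb (M : structure L S) k1 k2 (t1 : form L k1) (t2 : form L k2) w1 w2 :
  sat M (cmb t1 t2) (join w1 w2) <-> sat M t1 w1 /\ sat M t2 w2.
Proof.
rewrite /cmb /=.
have E1 := sat_ren M t1 (s := fun i => Var L (lshift k2 i)) (rho := lshift k2) (fun i => erefl) (join w1 w2).
have E2 := sat_ren M t2 (s := fun i => Var L (rshift k1 i)) (rho := fun i => rshift k1 i) (fun i => erefl) (join w1 w2).
rewrite join_lshift in E1; rewrite join_rshift in E2.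
by split; case=> h1 h2; split; [apply/E1|apply/E2|apply/E1|apply/E2].
Qed.

Lemma dom_join (M : structure L S) k1 k2 (w1 : 'I_k1 -> S) (w2 : 'I_k2 -> S) :
  (forall i, dom M (w1 i)) -> (forall i, dom M (w2 i)) -> forall i, dom M (join w1 w2 i).
Proof. by move=> h1 h2 i; rewrite /join; case: split. Qed.

Definition GoodM (V : MT S T -> Prop) : Prop :=
  forall M, V M -> exists k (w : 'I_k -> S) (th : form L k),
    sat (proj1_sig M) th w /\ (forall i, dom (proj1_sig M) (w i)) /\
    forall M' : MT S T, sat (proj1_sig M') th w -> V M'.

Lemma GoodM_top : is_topology GoodM.
Proof.
split; [|split].
- move=> M _; exists 0, (fun _ => s0), (FTop L 0); split => //; split => //.
  by case.
- move=> U V hU hV M [HU HV].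
  have [k1 [w1 [t1 [s1 [d1 H1]]]]] := hU M HU.
  have [k2 [w2 [t2 [s2 [d2 H2]]]]] := hV M HV.
  exists (k1 + k2), (join w1 w2), (cmb t1 t2); split; first by apply/sat_cmb.
  split; first exact: dom_join.
  by move=> M' /sat_cmb [h1 h2]; split; [apply: H1|apply: H2].
- move=> F HF M [U [FU UM]].
  have [k [w [t [s1 [d1 H1]]]]] := HF U FU M UM.
  exists k, w, t; split => //; split => // M' h; exists U; split => //; exact: H1.
Qed.

Lemma GoodM_sub V : MT_sub V -> GoodM V.
Proof.
case=> [[a ->]|[[r [a ->]]|[[a [b ->]]|[f [a [b ->]]]]]] M /=.
- move=> Ha; exists 1, (fun _ => a), (FEq (Var L ord0) (Var L ord0)).
  split; first by apply/(sat_eqvv (MT_struct M)).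
  split => // M' /(sat_eqvv (MT_struct M')) //.
- move=> Hr; exists (rarity r), a, (FRel (fun j => Var L j)).
  split; first by exists a; split => // j; apply: (rel_dom (MT_struct M) Hr).
  split; first exact: (rel_dom (MT_struct M) Hr).
  move=> M' [a' [Ha' Hr']]; apply: (rel_sat (MT_struct M') (a' := a) _ Hr') => j.
  exact: (sE_sym (MT_struct M') (Ha' j)).
- move=> Hab; exists 2, (fun i : 'I_2 => if val i == 0 then a else b),
    (FEq (Var L ord0) (Var L ord_max)).
  split; first by apply/(sat_eqvv (MT_struct M)).
  split; first by case=> [[|[|//]]] ? /=; [exact: (sE_doml (MT_struct M) Hab)|exact: (sE_domr (MT_struct M) Hab)].
  by move=> M' /(sat_eqvv (MT_struct M')).
- move=> Hf; have [Hda Hdb] := fun_dom (MT_struct M) Hf.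
  have E1 : forall j, ext b a (lift ord0 j) = a j by move=> j; rewrite /ext liftK.
  have E0 : ext b a ord0 = b by rewrite /ext unlift_none.
  exists (farity f).+1, (ext b a),
    (FEq (App (fun j => Var L (lift ord0 j))) (Var L ord0)).
  split.
    exists b; split.
      by exists a; split => // j; rewrite /= E1; apply: Hda.
    by rewrite /= E0.
  split; first by move=> i; rewrite /ext; case: (unlift ord0 i).
  move=> M' /= [c [[a' [Ha' Hf']] Hc]].
  have HM' := MT_struct M'.
  apply: (fun_sat HM' (a := a') (b := c)) Hf'.
    by move=> j; move: (Ha' j); rewrite /= E1 => h; exact: (sE_sym HM' h).
  by move: Hc; rewrite /= E0 => h; exact: (sE_sym HM' h).
Qed.

Lemma gen_GoodM V : gen_top (@MT_sub L S T) V -> GoodM V.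
Proof. move=> H; apply: H; [exact: GoodM_top|exact: GoodM_sub]. Qed.
End Nbhd.

Lemma join_l S n m (b : 'I_m -> S) (a : 'I_n -> S) (j : 'I_m) : join b a (lshift n j) = b j.
Proof. exact: join_lo. Qed.
Lemma join_r S n m (b : 'I_m -> S) (a : 'I_n -> S) (i : 'I_n) : join b a (rshift m i) = a i.
Proof. exact: join_hi. Qed.

Section Rep.
Variable L : signature.
Variable S : Type.
Variable M : structure L S.
Hypothesis HM : is_structure M.

Lemma rep_sE n (c : 'I_n -> S -> Prop) a a' :
  represents M c a -> represents M c a' -> forall i, sE M (a i) (a' i).
Proof.
move=> H H' i; have [_ E] := H i; have [d' E'] := H' i.
by move: d'; rewrite /dom -E' E.
Qed.

Lemma rep_move n (c : 'I_n -> S -> Prop) a a' :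
  represents M c a -> (forall i, sE M (a i) (a' i)) -> represents M c a'.
Proof.
move=> H He i; have [d E] := H i; split; first exact: (sE_domr HM (He i)).
rewrite E; apply: functional_extensionality => t; apply: propositional_extensionality.
split => h; first exact: (sE_trans HM (sE_sym HM (He i)) h).
exact: (sE_trans HM (He i) h).
Qed.

Lemma rep_cls_eq n (c c' : 'I_n -> S -> Prop) a :
  represents M c a -> represents M c' a -> c = c'.
Proof.
move=> H H'; apply: functional_extensionality => i.
by have [_ ->] := H i; have [_ ->] := H' i.
Qed.
End Rep.
Arguments rep_sE {L S M} {n c a a'} _ _.
Arguments rep_move {L S M} HM {n c a a'} _ _.
Arguments rep_cls_eq {L S M} {n c c' a} _ _.

Section NbE.
Variable L : signature.
Variable S : Type.
Variable T : forall n, form L n -> form L n -> Prop.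
Variable s0 : S.
Variable n : nat.
Variable phi : form L n.

Lemma Elt_rep (e : Elt S T phi) :
  exists a, represents (proj1_sig (pi1 e)) (cls e) a /\ sat (proj1_sig (pi1 e)) phi a.
Proof. exact: (proj2_sig e). Qed.

Definition eqs k : form L (k + k) :=
  bigA (enum 'I_k) (fun i => FEq (Var L (lshift k i)) (Var L (rshift k i))).

Lemma sat_eqs (M : structure L S) (HM : is_structure M) k (a1 a2 : 'I_k -> S) :
  sat M (eqs k) (join a1 a2) <-> forall i, sE M (a1 i) (a2 i).
Proof.
rewrite /eqs; split.
  by move/sat_bigA_enum => H i; move/(sat_eqvv HM): (H i); rewrite join_l join_r.
by move=> H; apply/sat_bigA_enum => i; apply/(sat_eqvv HM); rewrite join_l join_r.
Qed.

Definition GoodE (U : Elt S T phi -> Prop) : Prop :=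
  forall e, U e -> exists k (w : 'I_k -> S) (th : form L k) (a0 : 'I_n -> S),
    sat (proj1_sig (pi1 e)) th w /\ (forall i, dom (proj1_sig (pi1 e)) (w i)) /\
    represents (proj1_sig (pi1 e)) (cls e) a0 /\
    forall e', sat (proj1_sig (pi1 e')) th w ->
      represents (proj1_sig (pi1 e')) (cls e') a0 -> U e'.

Lemma GoodE_top : is_topology GoodE.
Proof.
split; [|split].
- move=> e _; have [a0 [Ha0 _]] := Elt_rep e.
  exists 0, (fun _ => s0), (FTop L 0), a0; split => //; split; first by case.
  by split.
- move=> U V hU hV e [HU HV].
  have [k1 [w1 [t1 [a1 [s1 [d1 [r1 H1]]]]]]] := hU e HU.
  have [k2 [w2 [t2 [a2 [s2 [d2 [r2 H2]]]]]]] := hV e HV.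
  have HM := MT_struct (pi1 e).
  exists (k1 + (k2 + (n + n))), (join w1 (join w2 (join a1 a2))),
    (cmb t1 (cmb t2 (eqs n))), a1.
  split.
    apply/sat_cmb; split => //; apply/sat_cmb; split => //.
    by apply/(sat_eqs HM); apply: rep_sE r1 r2.
  split.
    apply: dom_join => //; apply: dom_join => //; apply: dom_join => i.
      by have [] := r1 i.
    by have [] := r2 i.
  split => // e' /sat_cmb [h1 /sat_cmb [h2 h3]] r1'.
  have HM' := MT_struct (pi1 e').
  split; first exact: H1.
  apply: H2 => //; apply: (rep_move HM' r1').
  by move/(sat_eqs HM'): h3.
- move=> F HF e [U [FU Ue]].
  have [k [w [t [a0 [s1 [d1 [r1 H1]]]]]]] := HF U FU e Ue.
  exists k, w, t, a0; split => //; split => //; split => // e' h r.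
  by exists U; split => //; apply: H1.
Qed.

Lemma GoodE_sub U : Elt_sub U -> GoodE U.
Proof.
case=> [[V [HV ->]]|[a ->]] e /=.
  move=> HVe; have [k [w [t [s1 [d1 H1]]]]] := gen_GoodM s0 HV HVe.
  have [a0 [Ha0 _]] := Elt_rep e.
  exists k, w, t, a0; split => //; split => //; split => // e' h _.
  exact: H1.
move=> Ha; exists 0, (fun _ => s0), (FTop L 0), a; split => //; split; first by case.
by split.
Qed.

Lemma gen_GoodE U : gen_top (@Elt_sub L S T n phi) U -> GoodE U.
Proof. move=> H; apply: H; [exact: GoodE_top|exact: GoodE_sub]. Qed.
End NbE.

Lemma join_rel S n m (R : S -> S -> Prop) (b b' : 'I_m -> S) (a a' : 'I_n -> S) :
  (forall j, R (b j) (b' j)) -> (forall i, R (a i) (a' i)) ->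
  forall l, R (join b a l) (join b' a' l).
Proof. by move=> Hb Ha l; rewrite /join; case: split. Qed.

Lemma split_l m n (j : 'I_m) : split (lshift n j) = inl j.
Proof. exact: (unsplitK (inl _ j)). Qed.
Lemma split_r m n (i : 'I_n) : split (rshift m i) = inr i.
Proof. exact: (unsplitK (inr _ i)). Qed.

Section Main.
Variable L : signature.
Variable S : Type.
Variable T : forall n, form L n -> form L n -> Prop.
Variable ee : nat -> S.
Hypothesis eeinj : injective ee.
Variables n m : nat.
Variable phi : form L n.
Variable psi : form L m.
Variable g : Elt S T phi -> Elt S T psi.
Hypothesis Hg : sheaf_hom g.

Definition s0 := ee 0.

Definition Dat := {k : nat & (('I_k -> S) * form L k * ('I_n -> S) * ('I_m -> S))%type}.

Definition good (e : Elt S T phi) (d : Dat) : Prop :=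
  match d with existT k (w, th, a, b) =>
    sat (proj1_sig (pi1 e)) th w /\ (forall i, dom (proj1_sig (pi1 e)) (w i)) /\
    represents (proj1_sig (pi1 e)) (cls e) a /\
    represents (proj1_sig (pi1 e)) (cls (g e)) b /\
    forall e', sat (proj1_sig (pi1 e')) th w ->
      represents (proj1_sig (pi1 e')) (cls e') a ->
      represents (proj1_sig (pi1 (g e'))) (cls (g e')) b
  end.

Lemma pi1g e : pi1 (g e) = pi1 e.
Proof. by case: Hg => _ [H _]; apply: H. Qed.

Lemma exists_good e : exists d, good e d.
Proof.
have [b [Hb _]] := Elt_rep (g e).
pose U := fun e' : Elt S T psi => represents (proj1_sig (pi1 e')) (cls e') b.
have HU : gen_top (@Elt_sub L S T m psi) U.
  by move=> O _ Hsub; apply: Hsub; right; exists b.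
have HU' := (proj1 Hg) U HU.
have [k [w [th [a [s1 [d1 [r1 H1]]]]]]] := gen_GoodE s0 HU' Hb.
exists (existT _ k (w, th, a, b)); split => //; split => //; split => //.
by split; [rewrite -pi1g|].
Qed.

Definition dat e : Dat := proj1_sig (cid _ (exists_good e)).
Lemma dat_good e : good e (dat e).
Proof. exact: (proj2_sig (cid _ (exists_good e))). Qed.

Section Chi.
Variables (k : nat) (w : 'I_k -> S) (th : form L k) (a : 'I_n -> S) (b : 'I_m -> S).
Let K := k + (m + n).
Definition wt : 'I_K -> S := join w (join b a).

Definition body : form L (K + (m + n)) :=
  FAnd (fsubst th (fun i => Var L (lshift (m + n) (lshift (m + n) i))))
  (FAnd (bigA (enum 'I_(m + n))
          (fun l => FEq (Var L (lshift (m + n) (rshift k l))) (Var L (rshift K l))))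
  (FAnd (bigA (enum 'I_K) (fun i => bigA (enum 'I_K)
          (fun j => if emi (wt i = wt j)
                    then FEq (Var L (lshift (m + n) i)) (Var L (lshift (m + n) j))
                    else FTop L _)))
        (fsubst phi (fun i => Var L (rshift K (rshift m i)))))).

Definition mkchi : form L (m + n) := Exs body.

Lemma sat_body (M : structure L S) (HM : is_structure M) (z : 'I_K -> S) env :
  sat M body (join z env) <->
  [/\ sat M th (fun i => z (lshift (m + n) i)),
      (forall l, sE M (z (rshift k l)) (env l)),
      (forall i j, wt i = wt j -> sE M (z i) (z j)) &
      sat M phi (fun i => env (rshift m i))].
Proof.
have E1 := sat_ren M th (s := fun i => Var L (lshift (m + n) (lshift (m + n) i)))
   (rho := fun i => lshift (m + n) (lshift (m + n) i)) (fun i => erefl) (join z env).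
have E4 := sat_ren M phi (s := fun i => Var L (rshift K (rshift m i)))
   (rho := fun i => rshift K (rshift m i)) (fun i => erefl) (join z env).
have F1 : (fun i => join z env (lshift (m + n) (lshift (m + n) i))) =
          (fun i => z (lshift (m + n) i)).
  by apply: functional_extensionality => i; rewrite join_l.
have F4 : (fun i => join z env (rshift K (rshift m i))) = (fun i => env (rshift m i)).
  by apply: functional_extensionality => i; rewrite join_r.
rewrite F1 in E1; rewrite F4 in E4.
have E2 : sat M (bigA (enum 'I_(m + n))
          (fun l => FEq (Var L (lshift (m + n) (rshift k l))) (Var L (rshift K l)))) (join z env)
      <-> (forall l, sE M (z (rshift k l)) (env l)).
  split.
    by move/sat_bigA_enum => H l; move/(sat_eqvv HM): (H l); rewrite join_l join_r.
  by move=> H; apply/sat_bigA_enum => l; apply/(sat_eqvv HM); rewrite join_l join_r.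
have E3 : sat M (bigA (enum 'I_K) (fun i => bigA (enum 'I_K)
          (fun j => if emi (wt i = wt j)
                    then FEq (Var L (lshift (m + n) i)) (Var L (lshift (m + n) j))
                    else FTop L _))) (join z env)
      <-> (forall i j, wt i = wt j -> sE M (z i) (z j)).
  split.
    move/sat_bigA_enum => H i j Hp; move/sat_bigA_enum: (H i) => /(_ j).
    rewrite /=; destruct (emi (wt i = wt j)) as [Hy|Hn]; last by case: (Hn Hp).
    by move/(sat_eqvv HM); rewrite !join_l.
  move=> H; apply/sat_bigA_enum => i; apply/sat_bigA_enum => j; rewrite /=; destruct (emi (wt i = wt j)) as [Hp|]; last by [].
  by apply/(sat_eqvv HM); rewrite !join_l; apply: H.
rewrite /body /=; split.
  by case=> [/E1 h1 [/E2 h2 [/E3 h3 /E4 h4]]]; split.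
by case=> h1 h2 h3 h4; split; [apply/E1|split; [apply/E2|split; [apply/E3|apply/E4]]].
Qed.
End Chi.

Definition chi_e (e : Elt S T phi) : form L (m + n) :=
  match dat e with existT k (w, th, a, b) => mkchi w th a b end.

Definition chi : form L (m + n) := FDisj chi_e.

Lemma chi_bwd e (a : 'I_n -> S) (b : 'I_m -> S) :
  represents (proj1_sig (pi1 e)) (cls e) a ->
  represents (proj1_sig (pi1 e)) (cls (g e)) b ->
  sat (proj1_sig (pi1 e)) (chi_e e) (join b a).
Proof.
move=> Ha Hb; have HM := MT_struct (pi1 e).
rewrite /chi_e; move: (dat_good e); case: (dat e) => k [[[w th] ae] be] /=.
case=> s1 [d1 [ra [rb _]]].
apply/sat_Exs; exists (wt w ae be); split.
  apply: dom_join => //; apply: dom_join => i; [by have [] := rb i|by have [] := ra i].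
apply/(sat_body w th ae be HM); split.
- by rewrite /wt join_lshift.
- move=> l; rewrite /wt join_r; apply: join_rel; [exact: rep_sE rb Hb|exact: rep_sE ra Ha].
- move=> i j ->; have := dom_join d1 (dom_join (fun i => (rb i).1) (fun i => (ra i).1)).
  by apply.
- have [a0 [Ha0 Hs]] := Elt_rep e.
  rewrite join_rshift; apply: (sat_inv HM _ Hs) => i; exact: rep_sE Ha0 Ha i.
Qed.

Lemma chi_fwd (N : MT S T) (env : 'I_(m + n) -> S) :
  (forall l, dom (proj1_sig N) (env l)) -> sat (proj1_sig N) chi env ->
  exists e0 : Elt S T phi, pi1 e0 = N /\
    represents (proj1_sig N) (cls e0) (fun i => env (rshift m i)) /\
    represents (proj1_sig N) (cls (g e0)) (fun j => env (lshift n j)).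
Proof.
move=> Hd [e Hce]; have HN := MT_struct N.
move: Hce; rewrite /chi_e; move: (dat_good e); case: (dat e) => k [[[w th] a] b] /=.
case=> _ [_ [_ [_ Hnb]]].
move/sat_Exs => [z [Hz /(sat_body w th a b HN) [hA hB hC hD]]].
have [q [qs qw]] := surj_fix eeinj (wt w a b) z.
have Hq : forall i, sE (proj1_sig N) (q (wt w a b i)) (z i).
  move=> i; have [i' [E1 ->]] := qw i; exact: hC.
pose qi y := proj1_sig (cid _ (qs y)).
have qK : forall y, q (qi y) = y by move=> y; exact: (proj2_sig (cid _ (qs y))).
have Hqa : forall i, sE (proj1_sig N) (q (a i)) (env (rshift m i)).
  move=> i; have := Hq (rshift k (rshift m i)); rewrite /wt !join_r => h.
  exact: (sE_trans HN h (hB (rshift m i))).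
have Hqb : forall j, sE (proj1_sig N) (q (b j)) (env (lshift n j)).
  move=> j; have := Hq (rshift k (lshift n j)); rewrite /wt join_r join_l => h.
  exact: (sE_trans HN h (hB (lshift n j))).
have Hqw : forall i, sE (proj1_sig N) (q (w i)) (z (lshift (m + n) i)).
  by move=> i; have := Hq (lshift (m + n) i); rewrite /wt join_l.
pose N' := pull (proj1_sig N) q.
have HN'm : is_model T N' := pull_model HN qK (proj2_sig N).
pose N'MT : MT S T := exist _ N' HN'm.
have P0 : exists a0, represents (proj1_sig N) (fun i => sE (proj1_sig N) (env (rshift m i))) a0
          /\ sat (proj1_sig N) phi a0.
  by exists (fun i => env (rshift m i)); split.
pose e0 : Elt S T phi := exist _ (N, fun i => sE (proj1_sig N) (env (rshift m i))) P0.
have P1 : exists a0, represents N' (fun i => sE N' (a i)) a0 /\ sat N' phi a0.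
  exists a; split.
    by move=> i; split => //; exact: (sE_doml HN (Hqa i)).
  apply/(sat_pull _ qK); apply: (sat_inv HN _ hD) => i.
  exact: (sE_sym HN (Hqa i)).
pose e1 : Elt S T phi := exist _ (N'MT, fun i => sE N' (a i)) P1.
have R1 : represents (proj1_sig (pi1 (g e1))) (cls (g e1)) b.
  apply: Hnb.
    rewrite /= ; apply/(sat_pull _ qK); apply: (sat_inv HN _ hA) => i.
    exact: (sE_sym HN (Hqw i)).
  by move=> i; split => //; exact: (sE_doml HN (Hqa i)).
rewrite pi1g /= in R1.
pose f : IT S T := exist _ (N, N'MT, pullF (proj1_sig N) q) (pull_iso HN qK).
have Ecls : cls e1 = act_cls f (cls e0).
  apply: functional_extensionality => i; apply: functional_extensionality => t.
  apply: propositional_extensionality; rewrite /act_cls /= /pullF; split.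
    by move=> h; exists (q (a i)); split => //; exact: (sE_sym HN (Hqa i)).
  by case=> s [h1 h2]; exact: (sE_trans HN (Hqa i) (sE_trans HN h1 h2)).
have Heq := (proj2 (proj2 Hg)) f e0 e1 erefl erefl Ecls.
have [b'' [Rb'' _]] := Elt_rep (g e0).
rewrite pi1g /= in Rb''.
have Hb : forall j, sE (proj1_sig N) (env (lshift n j)) (b'' j).
  move=> j; have := f_equal (fun c => c j (qi (b'' j))) Heq.
  rewrite /= (R1 j).2 /= (qK (b'' j)) => E.
  have : act_cls f (cls (g e0)) j (qi (b'' j)).
    exists (b'' j); have [db ->] := Rb'' j; split => //.
    by rewrite /fI /= /pullF (qK (b'' j)).
  rewrite -E => h; exact: (sE_trans HN (sE_sym HN (Hqb j)) h).
exists e0; split => //; split; first by move=> i; split => //; exact: Hd.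
apply: (rep_move HN Rb'') => j; exact: (sE_sym HN (Hb j)).
Qed.
End Main.

Lemma Elt_eq L S T n (phi : form L n) (e1 e2 : Elt S T phi) :
  pi1 e1 = pi1 e2 -> cls e1 = cls e2 -> e1 = e2.
Proof.
case: e1 => [[M1 c1] p1]; case: e2 => [[M2 c2] p2]; rewrite /pi1 /cls /= => E1 E2.
subst; congr exist; exact: proof_irrelevance.
Qed.

Theorem corollary3p13 (L : signature) (S : Type)
  (T : forall n, form L n -> form L n -> Prop)
  (* |S| >= kappa >= |Sigma| + aleph_0 *)
  (hS : exists h : (Fsym L + Rsym L) + nat -> S, injective h)
  (* T has enough S-indexed models *)
  (enough : forall n (phi psi : form L n),
     (forall (M : MT S T) (env : 'I_n -> S),
        (forall i, dom (proj1_sig M) (env i)) ->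
        sat (proj1_sig M) phi env -> sat (proj1_sig M) psi env) ->
     Prov T phi psi) :
  forall n (phi : form L n) m (psi : form L m)
         (g : Elt S T phi -> Elt S T psi),
    sheaf_hom g ->
    exists chi : form L (m + n),
      prov_functional T phi psi chi /\
      forall e : Elt S T phi,
        exists (a : 'I_n -> S) (b : 'I_m -> S),
          represents (proj1_sig (pi1 e)) (cls e) a /\
          represents (proj1_sig (pi1 (g e))) (cls (g e)) b /\
          sat (proj1_sig (pi1 e)) chi (join b a).
Proof.
move=> n phi m psi g Hg.
have [h hinj] := hS.
pose ee k := h (inr k).
have eeinj : injective ee by move=> x y /hinj [].
exists (chi ee Hg); split; first split; [|split|].
- apply: enough => M env Hd Hc; have HM := MT_struct M.
  have [e0 [He0 [Ra Rb]]] := chi_fwd eeinj Hd Hc.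
  split.
    apply/(sat_ren _ _ (rho := fun i => rshift m i)) => //.
    have [a0 [Ra0 Hs0]] := Elt_rep e0; rewrite He0 in Ra0 Hs0.
    exact: (sat_inv HM (rep_sE Ra0 Ra) Hs0).
  apply/(sat_ren _ _ (rho := fun j => lshift n j)) => //.
  have [b0 [Rb0 Hs0]] := Elt_rep (g e0); rewrite (pi1g Hg) He0 in Rb0 Hs0.
  exact: (sat_inv HM (rep_sE Rb0 Rb) Hs0).
- apply: enough => M a Hd Hphi; have HM := MT_struct M.
  have P0 : exists a0, represents (proj1_sig M) (fun i => sE (proj1_sig M) (a i)) a0
          /\ sat (proj1_sig M) phi a0 by exists a; split.
  pose e0 : Elt S T phi := exist _ (M, fun i => sE (proj1_sig M) (a i)) P0.
  have [b0 [Rb0 _]] := Elt_rep (g e0); rewrite (pi1g Hg) /= in Rb0.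
  apply/sat_Exs; exists b0; split; first by move=> j; have [] := Rb0 j.
  exists e0; apply: (chi_bwd ee Hg (e := e0)) => //.
- apply: enough => M env Hd [h1 h2]; have HM := MT_struct M.
  pose rho1 (k : 'I_(m + n)) : 'I_(m + (m + n)) :=
    match split k with inl j => lshift (m + n) j | inr i => rshift m (rshift m i) end.
  pose rho2 (k : 'I_(m + n)) : 'I_(m + (m + n)) :=
    match split k with inl j => rshift m (lshift n j) | inr i => rshift m (rshift m i) end.
  have Hs1 : forall k, sig1 L k = Var L (rho1 k) by move=> k; rewrite /sig1 /rho1; case: split.
  have Hs2 : forall k, sig2 L k = Var L (rho2 k) by move=> k; rewrite /sig2 /rho2; case: split.
  have {h1}h1 := proj1 (sat_ren _ (chi ee Hg) Hs1 env) h1.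
  have {h2}h2 := proj1 (sat_ren _ (chi ee Hg) Hs2 env) h2.
  have [e1 [He1 [Ra1 Rb1]]] := chi_fwd eeinj (fun k => Hd (rho1 k)) h1.
  have [e2 [He2 [Ra2 Rb2]]] := chi_fwd eeinj (fun k => Hd (rho2 k)) h2.
  have Ea1 : (fun i => env (rho1 (rshift m i))) = (fun i => env (rshift m (rshift m i))).
    by apply: functional_extensionality => i; rewrite /rho1 split_r.
  have Ea2 : (fun i => env (rho2 (rshift m i))) = (fun i => env (rshift m (rshift m i))).
    by apply: functional_extensionality => i; rewrite /rho2 split_r.
  rewrite Ea1 in Ra1; rewrite Ea2 in Ra2.
  have E12 : e1 = e2 by apply: Elt_eq; [rewrite He1 He2|exact: rep_cls_eq Ra1 Ra2].
  subst e2.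
  change (sat (proj1_sig M) (bigA (enum 'I_m)
    (fun j => FEq (Var L (lshift (m + n) j)) (Var L (rshift m (lshift n j))))) env).
  apply/sat_bigA_enum => j; apply/(sat_eqvv HM).
  have := rep_sE Rb1 Rb2 j; by rewrite /rho1 /rho2 !split_l.
- move=> e; have HM := MT_struct (pi1 e).
  have [a0 [Ra0 _]] := Elt_rep e.
  have [b0 [Rb0 _]] := Elt_rep (g e).
  exists a0, b0; split => //; split => //.
  rewrite (pi1g Hg) in Rb0.
  by exists e; apply: chi_bwd.
Qed.
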